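(* Let $M$ be a compact Riemannian manifold and $f\colon M\to M$ a $C^1$ map. For every open cover $(U_i)_i$ of $(\overleftarrow M_f,d_1)$ there exists a partition of unity $(\rho_i)_i$ subordinate to it such that each $\rho_i\colon\overleftarrow M_f\to\mathbb R$ is $d_1$-continuous and $d_\infty$-Lipschitz.
   Context: $\overleftarrow M_f=\{(x_n)_{n\in\mathbb Z}\in M^{\mathbb Z}: f(x_n)=x_{n+1}\ \forall n\}$ with $d_1(\underline x,\underline y)=\sum_n2^{-|n|}d(x_n,y_n)$ and $d_\infty(\underline x,\underline y)=\sup_n d(x_n,y_n)$. *)

(* Defs.v *)
From Stdlib Require Import Reals Lra List ZArith.
From Coquelicot Require Import Coquelicot.
Open Scope R_scope.

Definition is_metric {M : Type} (d : M -> M -> R) : Prop :=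
  (forall x y, 0 <= d x y) /\
  (forall x y, d x y = 0 <-> x = y) /\
  (forall x y, d x y = d y x) /\
  (forall x y z, d x z <= d x y + d y z).

Definition open_in {X : Type} (dist : X -> X -> R) (U : X -> Prop) : Prop :=
  forall x, U x -> exists eps, 0 < eps /\ forall y, dist x y < eps -> U y.

Definition compact_metric {M : Type} (d : M -> M -> R) : Prop :=
  forall (I : Type) (U : I -> M -> Prop),
    (forall i, open_in d (U i)) -> (forall x, exists i, U i x) ->
    exists l : list I, forall x, exists i, In i l /\ U i x.

Definition continuous_metric {X Y : Type} (dX : X -> X -> R) (dY : Y -> Y -> R)
  (g : X -> Y) : Prop :=
  forall x eps, 0 < eps -> exists delta, 0 < delta /\
    forall y, dX x y < delta -> dY (g x) (g y) < eps.

Record orbit_space {M : Type} (f : M -> M) : Type := mkOrbit {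
  orb :> Z -> M;
  orbP : forall n : Z, f (orb n) = orb (n + 1)%Z }.

(* d_1(x,y) = sum_{n in Z} 2^{-|n|} d(x_n,y_n), written as the n = 0 term plus
   the series over k >= 1 of 2^{-k} (d(x_k,y_k) + d(x_{-k},y_{-k})). *)
Definition d_one {M : Type} (d : M -> M -> R) (f : M -> M)
  (x y : orbit_space f) : R :=
  d (x 0%Z) (y 0%Z) +
  Series (fun k : nat =>
    (/ 2) ^ (S k) *
    (d (x (Z.of_nat (S k))) (y (Z.of_nat (S k))) +
     d (x (- Z.of_nat (S k))%Z) (y (- Z.of_nat (S k))%Z))).

Definition d_infty {M : Type} (d : M -> M -> R) (f : M -> M)
  (x y : orbit_space f) : R :=
  real (Lub_Rbar (fun r => exists n : Z, r = d (x n) (y n))).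

Definition lipschitz_wrt {X : Type} (dist : X -> X -> R) (g : X -> R) : Prop :=
  exists L : R, forall x y, Rabs (g x - g y) <= L * dist x y.

Definition sum_list {I : Type} (l : list I) (a : I -> R) : R :=
  fold_right Rplus 0 (map a l).

(* (rho_i)_{i in I} is a partition of unity on (X, dist) subordinate to (U_i):
   nonnegative, the closure of {rho_i <> 0} lies in U_i, locally finite,
   and the (locally finite) sum of the rho_i is 1 everywhere. *)
Definition partition_of_unity_subordinate {X I : Type} (dist : X -> X -> R)
  (U : I -> X -> Prop) (rho : I -> X -> R) : Prop :=
  (forall i x, 0 <= rho i x) /\
  (forall i x,
     (forall eps, 0 < eps -> exists z, dist x z < eps /\ rho i z <> 0) ->
     U i x) /\
  (forall x, exists eps, 0 < eps /\ exists l : list I, NoDup l /\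
     (forall i y, ~ In i l -> dist x y < eps -> rho i y = 0) /\
     sum_list l (fun i => rho i x) = 1).

(* Main.v *)
Require Import Defs.
From Stdlib Require Import Reals Lra Lia List ZArith Classical ClassicalEpsilon IndefiniteDescription ClassicalDescription.
From Coquelicot Require Import Coquelicot.
Open Scope R_scope.

Lemma geom_half_series : is_series (fun k : nat => (/2)^(S k)) 1.
Proof.
  assert (H := is_series_geom (/2)).
  assert (Habs : Rabs (/2) < 1) by (rewrite Rabs_pos_eq; lra).
  specialize (H Habs).
  replace 1 with (/2 * / (1 - /2)) by field.
  apply (is_series_ext (fun k => /2 * (/2)^k)).
  { intros n. simpl. reflexivity. }
  apply (is_series_scal_l (/2)) in H. exact H.
Qed.

Lemma ex_series_bound (a : nat -> R) (B : R) :
  (forall k, 0 <= a k <= B * (/2)^(S k)) -> ex_series a.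
Proof.
  intros H.
  apply (ex_series_le a (fun k => B * (/2)^(S k))).
  { intros n. unfold norm; simpl. unfold abs; simpl. rewrite Rabs_pos_eq; apply H. }
  exists (B * 1). apply (is_series_scal_l B _ _ geom_half_series).
Qed.

Lemma series_nonneg (a : nat -> R) : (forall n, 0 <= a n) -> ex_series a -> 0 <= Series a.
Proof.
  intros H He.
  assert (H0 : Series (fun _ => 0) = 0).
  { rewrite (Series_ext _ (fun n => 0 * a n)) by (intros; ring).
    rewrite Series_scal_l. ring. }
  rewrite <- H0. apply Series_le; auto. intros n; split; [lra|auto].
Qed.

Lemma term_le_series (k : nat) : forall a : nat -> R, (forall n, 0 <= a n) -> ex_series a -> a k <= Series a.
Proof.
  induction k as [|k IH]; intros a H He.
  - rewrite (Series_incr_1 a He).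
    assert (0 <= Series (fun k => a (S k))).
    { apply series_nonneg; auto. apply ex_series_incr_1 in He. exact He. }
    lra.
  - rewrite (Series_incr_1 a He).
    assert (a (S k) <= Series (fun k => a (S k))).
    { apply (IH (fun k => a (S k))); auto. apply ex_series_incr_1 in He. exact He. }
    specialize (H 0%nat). lra.
Qed.

Lemma tail_bound (N : nat) : forall (e : nat -> R) (B eta : R),
  (forall k, 0 <= e k <= B) -> (forall k, (k < N)%nat -> e k <= eta) -> 0 <= eta ->
  Series (fun k => (/2)^(S k) * e k) <= eta + B * (/2)^N.
Proof.
  induction N as [|N IH]; intros e B eta He Heta Heta0.
  - rewrite pow_O, Rmult_1_r.
    assert (HB : 0 <= B) by (destruct (He 0%nat); lra).
    assert (Series (fun k => (/2)^(S k) * e k) <= Series (fun k => B * (/2)^(S k))).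
    { apply Series_le.
      - intros n. assert (0 < (/2)^(S n)) by (apply pow_lt; lra). destruct (He n).
        split; [apply Rmult_le_pos; lra | rewrite (Rmult_comm B); apply Rmult_le_compat_l; lra].
      - exists (B * 1). apply (is_series_scal_l B _ _ geom_half_series). }
    rewrite Series_scal_l in H. rewrite (is_series_unique _ _ geom_half_series) in H. lra.
  - assert (Hex : ex_series (fun k => (/2)^(S k) * e k)).
    { apply (ex_series_bound _ B). intros k. assert (0 < (/2)^(S k)) by (apply pow_lt; lra).
      destruct (He k). split; [apply Rmult_le_pos; lra | rewrite (Rmult_comm B); apply Rmult_le_compat_l; lra]. }
    rewrite (Series_incr_1 _ Hex).
    rewrite (Series_ext _ (fun k => /2 * ((/2)^(S k) * e (S k)))).
    2:{ intros n. simpl. ring. }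
    rewrite Series_scal_l.
    assert (IH' := IH (fun k => e (S k)) B eta (fun k => He (S k))).
    assert (Hs : Series (fun k => (/2)^(S k) * e (S k)) <= eta + B * (/2)^N).
    { apply IH'; auto. intros k Hk. apply Heta. lia. }
    assert (He0 : e 0%nat <= eta) by (apply Heta; lia).
    simpl. simpl in Hs. lra.
Qed.




Lemma sum_list_nonneg {A} (l : list A) (a : A -> R) :
  (forall y, 0 <= a y) -> 0 <= sum_list l a.
Proof. intros H. induction l; unfold sum_list in *; simpl; [lra|]. specialize (H a0). lra. Qed.

Lemma sum_list_ge_elem {A} (l : list A) (a : A -> R) (x : A) :
  (forall y, 0 <= a y) -> In x l -> a x <= sum_list l a.
Proof.
  intros H Hin. induction l as [|y l IH]; simpl in *; [contradiction|].
  assert (Hn := sum_list_nonneg l a H).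
  unfold sum_list in *; simpl.
  destruct Hin as [<-|Hin]; [lra|]. specialize (IH Hin). specialize (H y). lra.
Qed.

Lemma d_bound (M : Type) (d : M -> M -> R) (Hd : is_metric d) (Hcpt : compact_metric d) :
  exists D, 0 <= D /\ forall x y, d x y <= D.
Proof.
  destruct Hd as (Hnn & Hz & Hs & Ht).
  destruct (Hcpt M (fun m y => d m y < 1)) as [l Hl].
  - intros m y Hy. exists (1 - d m y). split; [lra|]. intros z Hz'.
    specialize (Ht m y z). lra.
  - intros x. exists x. assert (d x x = 0) by (apply Hz; auto). lra.
  - exists (2 + sum_list l (fun a => sum_list l (fun b => d a b))). split.
    + assert (0 <= sum_list l (fun a => sum_list l (fun b => d a b))).
      { apply sum_list_nonneg. intros; apply sum_list_nonneg; auto. }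
      lra.
    + intros x y. destruct (Hl x) as [a [Ha Hxa]]. destruct (Hl y) as [b [Hb Hyb]].
      assert (d a b <= sum_list l (fun b => d a b)) by (apply sum_list_ge_elem; auto).
      assert (sum_list l (fun b => d a b) <= sum_list l (fun a => sum_list l (fun b => d a b))).
      { apply (sum_list_ge_elem l (fun a => sum_list l (fun b => d a b))); auto.
        intros; apply sum_list_nonneg; auto. }
      assert (d x y <= d x a + d a b + d b y).
      { assert (H1 := Ht x a y). assert (H2 := Ht a b y). lra. }
      rewrite (Hs x a) in *. lra.
Qed.

Lemma orbit_iter (M : Type) (f : M -> M) (x : orbit_space f) (a : Z) (j : nat) :
  x (a + Z.of_nat j)%Z = Nat.iter j f (x a).
Proof.
  induction j as [|j IH].
  - simpl. f_equal. lia.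
  - rewrite Nat.iter_succ. rewrite <- IH. rewrite (orbP f x). f_equal. lia.
Qed.

Definition eterm {M : Type} (d : M -> M -> R) (f : M -> M) (x y : orbit_space f) (k : nat) : R :=
  d (x (Z.of_nat (S k))) (y (Z.of_nat (S k))) + d (x (- Z.of_nat (S k))%Z) (y (- Z.of_nat (S k))%Z).

Lemma d_one_eq {M : Type} (d : M -> M -> R) (f : M -> M) (x y : orbit_space f) :
  d_one d f x y = d (x 0%Z) (y 0%Z) + Series (fun k => (/2)^(S k) * eterm d f x y k).
Proof. reflexivity. Qed.

Lemma ex_d_one (M : Type) (d : M -> M -> R) (f : M -> M) (Hd : is_metric d) (D : R)
  (HD : forall x y, d x y <= D) (x y : orbit_space f) :
  ex_series (fun k => (/2)^(S k) * eterm d f x y k).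
Proof.
  destruct Hd as (Hnn & _).
  apply (ex_series_bound _ (2*D)). intros k. unfold eterm.
  assert (0 < (/2)^(S k)) by (apply pow_lt; lra).
  set (u := d (x (Z.of_nat (S k))) (y (Z.of_nat (S k)))).
  set (v := d (x (- Z.of_nat (S k))%Z) (y (- Z.of_nat (S k))%Z)).
  assert (0 <= u <= D) by (split; [apply Hnn|apply HD]).
  assert (0 <= v <= D) by (split; [apply Hnn|apply HD]).
  split; [apply Rmult_le_pos; lra|]. rewrite (Rmult_comm (2*D)). apply Rmult_le_compat_l; lra.
Qed.


Lemma eterm_nonneg (M : Type) (d : M -> M -> R) (f : M -> M) (Hd : is_metric d) x y k :
  0 <= eterm d f x y k.
Proof. destruct Hd as (Hnn & _). unfold eterm.
  assert (H1 := Hnn (x (Z.of_nat (S k))) (y (Z.of_nat (S k)))).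
  assert (H2 := Hnn (x (- Z.of_nat (S k))%Z) (y (- Z.of_nat (S k))%Z)). lra. Qed.

Lemma eterm_sym (M : Type) (d : M -> M -> R) (f : M -> M) (Hd : is_metric d) x y k :
  eterm d f x y k = eterm d f y x k.
Proof. destruct Hd as (_ & _ & Hs & _). unfold eterm. rewrite (Hs (x _)), (Hs (x (- _)%Z)). reflexivity. Qed.

Lemma eterm_tri (M : Type) (d : M -> M -> R) (f : M -> M) (Hd : is_metric d) x y z k :
  eterm d f x z k <= eterm d f x y k + eterm d f y z k.
Proof. destruct Hd as (_ & _ & _ & Ht). unfold eterm.
  assert (H1 := Ht (x (Z.of_nat (S k))) (y (Z.of_nat (S k))) (z (Z.of_nat (S k)))).
  assert (H2 := Ht (x (- Z.of_nat (S k))%Z) (y (- Z.of_nat (S k))%Z) (z (- Z.of_nat (S k))%Z)). lra. Qed.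

Lemma d1_nonneg (M : Type) (d : M -> M -> R) (f : M -> M) (Hd : is_metric d) D
  (HD : forall x y, d x y <= D) x y : 0 <= d_one d f x y.
Proof.
  rewrite d_one_eq.
  assert (0 <= Series (fun k => (/2)^(S k) * eterm d f x y k)).
  { apply series_nonneg; [|apply (ex_d_one M d f Hd D HD)].
    intros n. apply Rmult_le_pos; [apply pow_le; lra|apply eterm_nonneg; auto]. }
  destruct Hd as (Hnn & _). specialize (Hnn (x 0%Z) (y 0%Z)). lra.
Qed.

Lemma d1_sym (M : Type) (d : M -> M -> R) (f : M -> M) (Hd : is_metric d) x y :
  d_one d f x y = d_one d f y x.
Proof.
  rewrite !d_one_eq. rewrite (Series_ext _ (fun k => (/2)^(S k) * eterm d f y x k)).
  2:{ intros; rewrite eterm_sym; auto. }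
  destruct Hd as (_ & _ & Hs & _). rewrite Hs. reflexivity.
Qed.

Lemma d1_tri (M : Type) (d : M -> M -> R) (f : M -> M) (Hd : is_metric d) D
  (HD : forall x y, d x y <= D) x y z : d_one d f x z <= d_one d f x y + d_one d f y z.
Proof.
  rewrite !d_one_eq.
  assert (Series (fun k => (/2)^(S k) * eterm d f x z k) <=
          Series (fun k => (/2)^(S k) * eterm d f x y k) + Series (fun k => (/2)^(S k) * eterm d f y z k)).
  { rewrite <- Series_plus by (apply (ex_d_one M d f Hd D HD)).
    apply Series_le.
    - intros n. split. apply Rmult_le_pos; [apply pow_le; lra|apply eterm_nonneg; auto].
      rewrite <- Rmult_plus_distr_l. apply Rmult_le_compat_l; [apply pow_le; lra|apply eterm_tri; auto].
    - apply (ex_series_plus (fun k => (/2)^(S k) * eterm d f x y k) (fun k => (/2)^(S k) * eterm d f y z k));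
      apply (ex_d_one M d f Hd D HD). }
  destruct Hd as (_ & _ & _ & Ht). specialize (Ht (x 0%Z) (y 0%Z) (z 0%Z)). lra.
Qed.

Lemma coord_bound (M : Type) (d : M -> M -> R) (f : M -> M) (Hd : is_metric d) D
  (HD : forall x y, d x y <= D) (n : Z) :
  exists C, 0 <= C /\ forall x y : orbit_space f, d (x n) (y n) <= C * d_one d f x y.
Proof.
  assert (Hser : forall (x y : orbit_space f) k, d (x (Z.of_nat (S k))) (y (Z.of_nat (S k))) <= 2^(S k) * d_one d f x y
      /\ d (x (- Z.of_nat (S k))%Z) (y (- Z.of_nat (S k))%Z) <= 2^(S k) * d_one d f x y).
  { intros x y k.
    assert (Ht : (/2)^(S k) * eterm d f x y k <= Series (fun k => (/2)^(S k) * eterm d f x y k)).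
    { apply (term_le_series k (fun k => (/2)^(S k) * eterm d f x y k)).
      - intros m. apply Rmult_le_pos; [apply pow_le; lra|apply eterm_nonneg; auto].
      - apply (ex_d_one M d f Hd D HD). }
    assert (H0 : 0 <= d (x 0%Z) (y 0%Z)) by (apply Hd).
    assert (Hp : 0 < 2^(S k)) by (apply pow_lt; lra).
    assert (Hinv : 2^(S k) * (/2)^(S k) = 1) by (rewrite pow_inv; field; lra).
    assert (He : eterm d f x y k <= 2^(S k) * d_one d f x y).
    { rewrite d_one_eq. rewrite <- (Rmult_1_l (eterm d f x y k)). rewrite <- Hinv.
      rewrite Rmult_assoc. apply Rmult_le_compat_l; lra. }
    unfold eterm in He. destruct Hd as (Hnn & _).
    assert (H1 := Hnn (x (Z.of_nat (S k))) (y (Z.of_nat (S k)))).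
    assert (H2 := Hnn (x (- Z.of_nat (S k))%Z) (y (- Z.of_nat (S k))%Z)). lra. }
  destruct (Z.lt_trichotomy n 0) as [Hn|[Hn|Hn]].
  - set (k := (Z.to_nat (- n) - 1)%nat). exists (2^(S k)). split; [apply pow_le; lra|].
    intros x y. assert (Hk : n = (- Z.of_nat (S k))%Z) by (unfold k; lia). rewrite Hk. apply Hser.
  - subst. exists 1. split; [lra|]. intros x y. rewrite d_one_eq, Rmult_1_l.
    assert (0 <= Series (fun k => (/2)^(S k) * eterm d f x y k)).
    { apply series_nonneg; [|apply (ex_d_one M d f Hd D HD)].
      intros m. apply Rmult_le_pos; [apply pow_le; lra|apply eterm_nonneg; auto]. }
    lra.
  - set (k := (Z.to_nat n - 1)%nat). exists (2^(S k)). split; [apply pow_le; lra|].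
    intros x y. assert (Hk : n = (Z.of_nat (S k))%Z) by (unfold k; lia). rewrite Hk. apply Hser.
Qed.

Lemma dinf_ge (M : Type) (d : M -> M -> R) (f : M -> M) D
  (HD : forall x y, d x y <= D) (x y : orbit_space f) (n : Z) :
  d (x n) (y n) <= d_infty d f x y.
Proof.
  unfold d_infty. destruct (Lub_Rbar_correct (fun r => exists n : Z, r = d (x n) (y n))) as [Hub Hl].
  assert (H1 : Rbar_le (d (x n) (y n)) (Lub_Rbar (fun r => exists n : Z, r = d (x n) (y n)))).
  { apply Hub. exists n. reflexivity. }
  assert (H2 : Rbar_le (Lub_Rbar (fun r => exists n : Z, r = d (x n) (y n))) D).
  { apply Hl. intros r [m ->]. simpl. apply HD. }
  destruct (Lub_Rbar (fun r => exists n : Z, r = d (x n) (y n))); simpl in *; tauto.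
Qed.

Lemma d1_le_dinf (M : Type) (d : M -> M -> R) (f : M -> M) (Hd : is_metric d) D
  (HD : forall x y, d x y <= D) (x y : orbit_space f) :
  d_one d f x y <= 3 * d_infty d f x y.
Proof.
  rewrite d_one_eq. set (m := d_infty d f x y).
  assert (H0 := dinf_ge M d f D HD x y 0%Z). fold m in H0.
  assert (Series (fun k => (/2)^(S k) * eterm d f x y k) <= Series (fun k => (2*m) * (/2)^(S k))).
  { apply Series_le.
    - intros k. split. apply Rmult_le_pos; [apply pow_le; lra|apply eterm_nonneg; auto].
      rewrite (Rmult_comm (2*m)). apply Rmult_le_compat_l; [apply pow_le; lra|].
      unfold eterm. assert (H1 := dinf_ge M d f D HD x y (Z.of_nat (S k))).
      assert (H2 := dinf_ge M d f D HD x y (- Z.of_nat (S k))%Z). fold m in H1, H2. lra.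
    - exists ((2*m) * 1). apply (is_series_scal_l (2*m) _ _ geom_half_series). }
  rewrite Series_scal_l, (is_series_unique _ _ geom_half_series) in H. lra.
Qed.

Lemma d1_small (M : Type) (d : M -> M -> R) (f : M -> M) (Hd : is_metric d) D
  (HD : forall x y, d x y <= D) (x y : orbit_space f) (N : nat) (eta : R) :
  (forall j, (j <= 2 * N)%nat -> d (x (- Z.of_nat N + Z.of_nat j)%Z) (y (- Z.of_nat N + Z.of_nat j)%Z) < eta) ->
  d_one d f x y < 3 * eta + 2 * D * (/2)^N.
Proof.
  intros H. rewrite d_one_eq.
  assert (H0 : d (x 0%Z) (y 0%Z) < eta).
  { replace 0%Z with (- Z.of_nat N + Z.of_nat N)%Z by lia. apply H. lia. }
  assert (Heta : 0 <= eta) by (assert (0 <= d (x 0%Z) (y 0%Z)) by apply Hd; lra).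
  assert (Series (fun k => (/2)^(S k) * eterm d f x y k) <= 2 * eta + (2 * D) * (/2)^N).
  { apply tail_bound; [|intros k Hk|lra].
    - intros k. split; [apply eterm_nonneg; auto|]. unfold eterm.
      assert (H1 := HD (x (Z.of_nat (S k))) (y (Z.of_nat (S k)))).
      assert (H2 := HD (x (- Z.of_nat (S k))%Z) (y (- Z.of_nat (S k))%Z)). lra.
    - unfold eterm.
      assert (H1 : d (x (Z.of_nat (S k))) (y (Z.of_nat (S k))) < eta).
      { replace (Z.of_nat (S k)) with (- Z.of_nat N + Z.of_nat (N + S k))%Z by lia. apply H. lia. }
      assert (H2 : d (x (- Z.of_nat (S k))%Z) (y (- Z.of_nat (S k))%Z) < eta).
      { replace (- Z.of_nat (S k))%Z with (- Z.of_nat N + Z.of_nat (N - S k))%Z by lia. apply H. lia. }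
      lra. }
  lra.
Qed.


Lemma join_covers {X I : Type} (P : list X) (Q : X -> Prop) (cov : X -> list I -> Prop) :
  (forall p l l', incl l l' -> cov p l -> cov p l') ->
  (forall p, In p P -> Q p -> exists l, cov p l) ->
  exists L, forall p, In p P -> Q p -> cov p L.
Proof.
  intros Hmon H. induction P as [|p P IH].
  - exists nil. intros p [].
  - destruct IH as [L HL]. { intros q Hq. apply H. right; auto. }
    destruct (classic (Q p)) as [Hq|Hq].
    + destruct (H p (or_introl eq_refl) Hq) as [l Hl].
      exists (l ++ L). intros q [E|Hin] Hq'.
      * subst q. apply (Hmon p l); auto. intros a Ha; apply in_or_app; auto.
      * apply (Hmon q L); auto. intros a Ha; apply in_or_app; auto.
    + exists L. intros q [E|Hin] Hq'; [subst q; contradiction|auto].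
Qed.

Fixpoint iterseq {X : Type} (h : nat * X -> X) (c0 : X) (k : nat) : X :=
  match k with 0%nat => c0 | S k => h (k, iterseq h c0 k) end.

Lemma eventually_pow (eps : R) : 0 < eps -> exists N, forall n, (N <= n)%nat -> (/2)^n < eps.
Proof.
  intros He. destruct (pow_lt_1_zero (/2)) with (y := eps) as [N HN]; auto.
  { rewrite Rabs_pos_eq; lra. }
  exists N. intros n Hn. specialize (HN n Hn). rewrite Rabs_pos_eq in HN; auto. apply pow_le; lra.
Qed.

Lemma tb_complete_compact (X I : Type) (dl : X -> X -> R)
  (Hrefl : forall x, dl x x = 0)
  (Hsym : forall x y, dl x y = dl y x) (Htri : forall x y z, dl x z <= dl x y + dl y z)
  (HTB : forall eps, 0 < eps -> exists P : list X, forall y, exists p, In p P /\ dl p y < eps)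
  (Hcomp : forall s : nat -> X, (forall k m, dl (s k) (s (k + m)%nat) <= 3 * (/2)^k) ->
     exists c, forall eps, 0 < eps -> exists K, forall k, (K <= k)%nat -> dl (s k) c < eps)
  (U : I -> X -> Prop) (Hopen : forall i, open_in dl (U i)) (Hcov : forall x, exists i, U i x) :
  exists l : list I, forall x, exists i, In i l /\ U i x.
Proof.
  apply NNPP. intros Hno.
  set (cov := fun (c : X) (r : R) (l : list I) => forall x, dl c x < r -> exists i, In i l /\ U i x).
  set (bad := fun c r => ~ exists l, cov c r l).
  assert (Hmon : forall r p l l', incl l l' -> cov p r l -> cov p r l').
  { intros r p l l' Hi Hc x Hx. destruct (Hc x Hx) as [i [Hin Hu]]. exists i; split; auto. }
  assert (Hstep : forall c r, 0 < r -> bad c r -> exists c', dl c c' < 3/2 * r /\ bad c' (r/2)).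
  { intros c r Hr Hb. apply NNPP. intros Hn. apply Hb.
    destruct (HTB (r/2)) as [P HP]; [lra|].
    destruct (join_covers P (fun p => dl c p < 3/2 * r) (fun p l => cov p (r/2) l)) as [L HL].
    { intros p l l' Hi Hc. apply (Hmon _ p l l'); auto. }
    { intros p _ Hp. apply NNPP. intros Hnc. apply Hn. exists p. split; auto. }
    exists L. intros x Hx. destruct (HP x) as [p [Hin Hpx]].
    apply (HL p Hin); auto. assert (H1 := Htri c x p). rewrite (Hsym x p) in H1. lra. }
  assert (Hinit : exists c0, bad c0 1).
  { destruct (HTB 1) as [P HP]; [lra|]. apply NNPP. intros Hn. apply Hno.
    destruct (join_covers P (fun _ => True) (fun p l => cov p 1 l)) as [L HL].
    { intros p l l' Hi Hc. apply (Hmon _ p l l'); auto. }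
    { intros p _ _. apply NNPP. intros Hnc. apply Hn. exists p. exact Hnc. }
    exists L. intros x. destruct (HP x) as [p [Hin Hpx]]. apply (HL p Hin Logic.I x Hpx). }
  destruct Hinit as [c0 Hc0].
  destruct (functional_choice (fun (kc : nat * X) c' => bad (snd kc) ((/2)^(fst kc)) ->
     dl (snd kc) c' < 3/2 * (/2)^(fst kc) /\ bad c' ((/2)^(S (fst kc))))) as [h Hh].
  { intros [k c]. simpl. destruct (classic (bad c ((/2)^k))) as [Hb|Hb].
    - assert (Hp : 0 < (/2)^k) by (apply pow_lt; lra).
      destruct (Hstep c ((/2)^k) Hp Hb) as [c' [H1 H2]].
      exists c'. intros _. split; auto. replace (/2 * (/2)^k) with ((/2)^k/2) by field. auto.
    - exists c. intros Hb'. contradiction. }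
  set (cs := iterseq h c0).
  assert (Hbad : forall k, bad (cs k) ((/2)^k)).
  { induction k as [|k IH]. simpl. exact Hc0. apply (Hh (k, cs k)). exact IH. }
  assert (Hd1 : forall k, dl (cs k) (cs (S k)) < 3/2 * (/2)^k).
  { intros k. apply (Hh (k, cs k)). apply Hbad. }
  assert (Hcauchy : forall k m, dl (cs k) (cs (k + m)%nat) <= 3 * (/2)^k * (1 - (/2)^m)).
  { intros k m. induction m as [|m IH].
    - rewrite Nat.add_0_r, Hrefl. simpl. lra.
    - assert (H1 := Htri (cs k) (cs (k + m)%nat) (cs (k + S m)%nat)).
      replace (k + S m)%nat with (S (k + m)) in * by lia.
      assert (H2 := Hd1 (k + m)%nat). rewrite pow_add in H2. simpl. simpl in H2. lra. }
  destruct (Hcomp cs) as [c Hc].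
  { intros k m. assert (H := Hcauchy k m). assert (0 <= (/2)^m) by (apply pow_le; lra).
    assert (0 <= (/2)^k) by (apply pow_le; lra). nra. }
  destruct (Hcov c) as [i Hi]. destruct (Hopen i c Hi) as [eps [He Heps]].
  destruct (Hc (eps/2)) as [K HK]; [lra|].
  destruct (eventually_pow (eps/2)) as [N HN]; [lra|].
  apply (Hbad (max K N)). exists (i :: nil). intros x Hx. exists i. split; [left; auto|].
  apply Heps. assert (H1 := HK (max K N) (Nat.le_max_l K N)).
  assert (H2 := HN (max K N) (Nat.le_max_r K N)).
  assert (H3 := Htri c (cs (max K N)) x). rewrite (Hsym c (cs (max K N))) in H3. lra.
Qed.


Lemma fin_event {A : Type} (l : list A) (Q : A -> nat -> Prop) :
  (forall a, In a l -> exists K, forall k, (K <= k)%nat -> Q a k) ->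
  exists K, forall a, In a l -> forall k, (K <= k)%nat -> Q a k.
Proof.
  intros H. induction l as [|a l IH].
  - exists 0%nat. intros a [].
  - destruct IH as [K1 HK1]. { intros b Hb. apply H. right; auto. }
    destruct (H a (or_introl eq_refl)) as [K2 HK2].
    exists (max K1 K2). intros b [E|Hb] k Hk.
    + subst b. apply HK2. lia.
    + apply HK1; auto. lia.
Qed.

Lemma fin_delta {A B : Type} (dist : B -> R) (Q : A -> B -> Prop) (l : list A) :
  (forall a, In a l -> exists del, 0 < del /\ forall z, dist z < del -> Q a z) ->
  exists del, 0 < del /\ forall a, In a l -> forall z, dist z < del -> Q a z.
Proof.
  intros H. induction l as [|a l IH].
  - exists 1. split; [lra|]. intros a [].
  - destruct IH as [d1 [Hd1 HK1]]. { intros b Hb. apply H. right; auto. }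
    destruct (H a (or_introl eq_refl)) as [d2 [Hd2 HK2]].
    exists (Rmin d1 d2). split. { apply Rmin_pos; auto. }
    intros b [E|Hb] z Hz.
    + subst b. apply HK2. assert (Rmin d1 d2 <= d2) by apply Rmin_r. lra.
    + apply HK1; auto. assert (Rmin d1 d2 <= d1) by apply Rmin_l. lra.
Qed.

Lemma M_complete (M : Type) (d : M -> M -> R) (Hd : is_metric d) (Hcpt : compact_metric d)
  (t : nat -> M) (C : R) :
  (forall k m, d (t k) (t (k + m)%nat) <= C * (/2)^k) ->
  exists c, forall eps, 0 < eps -> exists K, forall k, (K <= k)%nat -> d (t k) c < eps.
Proof.
  intros Ht. destruct Hd as (Hnn & Hz & Hs & Htr).
  apply NNPP. intros Hn.
  set (valid := fun (me : M * R) => 0 < snd me /\ forall N, exists k, (N <= k)%nat /\ snd me <= d (t k) (fst me)).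
  destruct (Hcpt (M * R)%type (fun me y => valid me /\ d (fst me) y < snd me / 2)) as [l Hl].
  - intros [m e] y [Hv Hy]. simpl in *. exists (e/2 - d m y). split; [lra|].
    intros z Hz'. split; auto. simpl. assert (H1 := Htr m y z). lra.
  - intros y. assert (Hy : ~ forall eps, 0 < eps -> exists K, forall k, (K <= k)%nat -> d (t k) y < eps).
    { intros H. apply Hn. exists y. exact H. }
    apply not_all_ex_not in Hy. destruct Hy as [eps Heps].
    apply imply_to_and in Heps. destruct Heps as [He Hne].
    exists (y, eps). split.
    + split; simpl; auto. intros N. apply NNPP. intros Hk. apply Hne. exists N.
      intros k Hkn. apply NNPP. intros Hlt. apply Hk. exists k. split; auto. lra.
    + simpl. assert (d y y = 0) by (apply Hz; auto). lra.
  - destruct (fin_event l (fun me N => valid me -> C * (/2)^N < snd me / 2)) as [N HN].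
    { intros [m e] _. destruct (classic (0 < e)) as [He|He].
      - destruct (eventually_pow (e / (2 * (Rabs C + 1)))) as [N HN].
        { apply Rdiv_lt_0_compat; [lra|]. assert (0 <= Rabs C) by apply Rabs_pos. lra. }
        exists N. intros k Hk _. simpl. specialize (HN k Hk).
        assert (0 <= Rabs C) by apply Rabs_pos.
        assert (Hp : 0 <= (/2)^k) by (apply pow_le; lra).
        assert (C * (/2)^k <= (Rabs C + 1) * (/2)^k).
        { apply Rmult_le_compat_r; auto. assert (C <= Rabs C) by apply Rle_abs. lra. }
        assert ((Rabs C + 1) * (/2)^k < (Rabs C + 1) * (e / (2 * (Rabs C + 1)))).
        { apply Rmult_lt_compat_l; auto. lra. }
        replace ((Rabs C + 1) * (e / (2 * (Rabs C + 1)))) with (e/2) in * by (field; lra). lra.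
      - exists 0%nat. intros k _ [Hv _]. simpl in Hv. lra. }
    destruct (Hl (t N)) as [[m e] [Hin [Hv Hd]]]. simpl in Hd.
    assert (HC := HN (m, e) Hin N (le_n N) Hv). simpl in HC.
    destruct Hv as [He Hk]. simpl in He, Hk. destruct (Hk N) as [k [Hkn Hke]].
    assert (H1 := Ht N (k - N)%nat). replace (N + (k - N))%nat with k in H1 by lia.
    assert (H2 := Htr (t k) (t N) m). rewrite (Hs (t k) (t N)) in H2. rewrite (Hs m (t N)) in Hd. lra.
Qed.


Lemma choose_N (eps D : R) : 0 < eps -> 0 <= D -> exists N, 2 * D * (/2)^N <= eps / 2.
Proof.
  intros He HD. destruct (eventually_pow (eps / (4 * (D + 1)))) as [N HN].
  { apply Rdiv_lt_0_compat; lra. }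
  exists N. specialize (HN N (le_n N)).
  assert (Hp : 0 <= (/2)^N) by (apply pow_le; lra).
  assert (2 * D * (/2)^N <= 2 * (D + 1) * (/2)^N) by (apply Rmult_le_compat_r; lra).
  assert (2 * (D+1) * (/2)^N < 2 * (D+1) * (eps / (4 * (D + 1)))).
  { apply Rmult_lt_compat_l; lra. }
  replace (2 * (D+1) * (eps / (4 * (D + 1)))) with (eps/2) in * by (field; lra). lra.
Qed.

Lemma d1_refl (M : Type) (d : M -> M -> R) (f : M -> M) (Hd : is_metric d) (x : orbit_space f) :
  d_one d f x x = 0.
Proof.
  destruct Hd as (_ & Hz & _).
  assert (H0 : forall m, d m m = 0) by (intros; apply Hz; auto).
  rewrite d_one_eq. rewrite (Series_ext _ (fun k => 0 * 0)).
  2:{ intros n. unfold eterm. rewrite !H0. ring. }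
  rewrite Series_scal_l. rewrite H0. ring.
Qed.

Lemma zero_of_small (a : R) : 0 <= a -> (forall eps, 0 < eps -> a < eps) -> a = 0.
Proof. intros H1 H2. destruct (Req_dec a 0); auto. specialize (H2 a). lra. Qed.

Lemma X_complete (M : Type) (d : M -> M -> R) (f : M -> M) (Hd : is_metric d) (Hcpt : compact_metric d)
  (Hf : continuous_metric d d f) D (HD0 : 0 <= D) (HD : forall x y, d x y <= D)
  (s : nat -> orbit_space f) :
  (forall k m, d_one d f (s k) (s (k + m)%nat) <= 3 * (/2)^k) ->
  exists c, forall eps, 0 < eps -> exists K, forall k, (K <= k)%nat -> d_one d f (s k) c < eps.
Proof.
  intros Hs.
  assert (Hc : forall n : Z, exists cn, forall eps, 0 < eps -> exists K, forall k, (K <= k)%nat -> d ((s k) n) cn < eps).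
  { intros n. destruct (coord_bound M d f Hd D HD n) as [C [HC0 HC]].
    apply (M_complete M d Hd Hcpt (fun k => (s k) n) (C * 3)).
    intros k m. simpl. eapply Rle_trans; [apply HC|]. rewrite Rmult_assoc.
    apply Rmult_le_compat_l; auto. }
  destruct (functional_choice _ Hc) as [g Hg].
  destruct Hd as (Hnn & Hz & Hsy & Htr).
  assert (Horb : forall n, f (g n) = g (n + 1)%Z).
  { intros n. apply Hz. apply zero_of_small; [apply Hnn|]. intros eps He.
    destruct (Hf (g n) (eps/2)) as [del [Hdel Hdf]]; [lra|].
    destruct (Hg n del Hdel) as [K1 HK1]. destruct (Hg (n+1)%Z (eps/2)) as [K2 HK2]; [lra|].
    set (k := max K1 K2).
    assert (H1 := HK1 k (Nat.le_max_l _ _)). assert (H2 := HK2 k (Nat.le_max_r _ _)).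
    rewrite Hsy in H1. assert (H3 := Hdf _ H1). rewrite (orbP f (s k) n) in H3.
    assert (H4 := Htr (f (g n)) ((s k) (n + 1)%Z) (g (n+1)%Z)). lra. }
  exists (mkOrbit M f g Horb).
  intros eps He.
  destruct (choose_N eps D He HD0) as [N HN].
  destruct (fin_event (seq 0 (S (2 * N))) (fun j k => d ((s k) (- Z.of_nat N + Z.of_nat j)%Z) (g (- Z.of_nat N + Z.of_nat j)%Z) < eps / 6)) as [K HK].
  { intros j _. apply Hg. lra. }
  exists K. intros k Hk.
  assert (H := d1_small M d f (conj Hnn (conj Hz (conj Hsy Htr))) D HD (s k) (mkOrbit M f g Horb) N (eps/6)).
  simpl in H.
  assert (d_one d f (s k) (mkOrbit M f g Horb) < 3 * (eps / 6) + 2 * D * (/ 2) ^ N).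
  { apply H. intros j Hj. apply HK; auto. apply in_seq. lia. }
  lra.
Qed.


Lemma iter_cont (M : Type) (d : M -> M -> R) (f : M -> M) (Hf : continuous_metric d d f) (j : nat) :
  forall m eps, 0 < eps -> exists del, 0 < del /\ forall m', d m m' < del -> d (Nat.iter j f m) (Nat.iter j f m') < eps.
Proof.
  induction j as [|j IH]; intros m eps He.
  - exists eps. split; auto.
  - destruct (Hf (Nat.iter j f m) eps He) as [d1 [Hd1 H1]].
    destruct (IH m d1 Hd1) as [d2 [Hd2 H2]].
    exists d2. split; auto. intros m' Hm. rewrite !Nat.iter_succ. apply H1. apply H2. auto.
Qed.

Lemma X_TB (M : Type) (d : M -> M -> R) (f : M -> M) (Hd : is_metric d) (Hcpt : compact_metric d)
  (Hf : continuous_metric d d f) D (HD0 : 0 <= D) (HD : forall x y, d x y <= D) :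
  forall eps, 0 < eps -> exists P : list (orbit_space f), forall y, exists p, In p P /\ d_one d f p y < eps.
Proof.
  intros eps He.
  destruct (choose_N eps D He HD0) as [N HN].
  set (eta := eps / 6).
  set (valid := fun (md : M * R) => 0 < snd md /\ forall j, In j (seq 0 (S (2 * N))) -> forall m'', d (fst md) m'' < snd md ->
     d (Nat.iter j f (fst md)) (Nat.iter j f m'') < eta / 2).
  set (V := fun (md : M * R) (m' : M) => valid md /\ d (fst md) m' < snd md).
  assert (Hd' := Hd). destruct Hd' as (Hnn & Hz & Hsy & Htr).
  destruct (Hcpt (M * R)%type V) as [L HL].
  - intros [m del] y [Hv Hy]. simpl in *. exists (del - d m y). split; [lra|].
    intros z Hz'. split; auto. simpl. assert (H1 := Htr m y z). lra.
  - intros m. destruct (fin_delta (fun m'' => d m m'') (fun j m'' => d (Nat.iter j f m) (Nat.iter j f m'') < eta / 2) (seq 0 (S (2 * N)))) as [del [Hdel Hdm]].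
    { intros j _. apply iter_cont; auto. unfold eta. lra. }
    exists (m, del). split.
    + split; simpl; auto.
    + simpl. assert (d m m = 0) by (apply Hz; auto). lra.
  - destruct (classic (inhabited (orbit_space f))) as [Hinh|Hninh].
    2:{ exists nil. intros y. exfalso. apply Hninh. constructor. exact y. }
    set (g := fun md => epsilon Hinh (fun p : orbit_space f => V md (p (- Z.of_nat N)%Z))).
    exists (map g L). intros y.
    destruct (HL (y (- Z.of_nat N)%Z)) as [md [Hin HV]].
    exists (g md). split; [apply in_map; auto|].
    assert (Hg : V md ((g md) (- Z.of_nat N)%Z)).
    { unfold g. apply (epsilon_spec Hinh (fun p : orbit_space f => V md (p (- Z.of_nat N)%Z))). exists y. exact HV. }
    destruct md as [m del]. destruct Hg as [[Hpos Hv] Hp]. destruct HV as [_ Hy]. simpl in *.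
    assert (H := d1_small M d f Hd D HD (g (m, del)) y N eta).
    assert (d_one d f (g (m, del)) y < 3 * eta + 2 * D * (/ 2) ^ N).
    { apply H. intros j Hj. rewrite !orbit_iter.
      assert (Hj' : In j (seq 0 (S (2 * N)))) by (apply in_seq; lia).
      assert (H1 := Hv j Hj' _ Hp). assert (H2 := Hv j Hj' _ Hy).
      assert (H3 := Htr (Nat.iter j f ((g (m, del)) (- Z.of_nat N)%Z)) (Nat.iter j f m) (Nat.iter j f (y (- Z.of_nat N)%Z))).
      rewrite (Hsy (Nat.iter j f ((g (m, del)) (- Z.of_nat N)%Z)) (Nat.iter j f m)) in H3. lra. }
    unfold eta in *. lra.
Qed.


Lemma sum_list_cons {A} (a : A) l (u : A -> R) : sum_list (a :: l) u = u a + sum_list l u.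
Proof. reflexivity. Qed.
Lemma sum_list_nil {A} (u : A -> R) : sum_list nil u = 0.
Proof. reflexivity. Qed.

Lemma sum_list_ext {A} (l : list A) (u v : A -> R) : (forall a, In a l -> u a = v a) -> sum_list l u = sum_list l v.
Proof. induction l as [|a l IH]; intros H; [reflexivity|]. rewrite !sum_list_cons. rewrite H by (left; auto).
  rewrite IH; auto. intros; apply H; right; auto. Qed.

Lemma sum_list_zero {A} (l : list A) (u : A -> R) : (forall a, In a l -> u a = 0) -> sum_list l u = 0.
Proof. intros H. induction l as [|a l IH]; [reflexivity|]. rewrite sum_list_cons, H, IH. ring.
  intros; apply H; right; auto. left; auto. Qed.

Lemma sum_list_plus {A} (l : list A) (u v : A -> R) : sum_list l (fun a => u a + v a) = sum_list l u + sum_list l v.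
Proof. induction l as [|a l IH]; [simpl; unfold sum_list; simpl; ring|]. rewrite !sum_list_cons, IH. ring. Qed.

Lemma sum_list_div {A} (l : list A) (u : A -> R) c : sum_list l (fun a => u a / c) = sum_list l u / c.
Proof. induction l as [|a l IH]; [unfold sum_list; simpl; unfold Rdiv; ring|]. rewrite !sum_list_cons, IH. unfold Rdiv; ring. Qed.

Lemma sum_list_le {A} (l : list A) (u v : A -> R) : (forall a, In a l -> u a <= v a) -> sum_list l u <= sum_list l v.
Proof. induction l as [|a l IH]; intros H; [unfold sum_list; simpl; lra|]. rewrite !sum_list_cons.
  assert (u a <= v a) by (apply H; left; auto). assert (sum_list l u <= sum_list l v) by (apply IH; intros; apply H; right; auto). lra. Qed.

Lemma sum_list_nonneg' {A} (l : list A) (u : A -> R) : (forall a, In a l -> 0 <= u a) -> 0 <= sum_list l u.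
Proof. intros H. assert (E : sum_list l (fun _ => 0) = 0) by (apply sum_list_zero; auto).
  rewrite <- E. apply sum_list_le. auto. Qed.

Lemma sum_list_ge_elem' {A} (l : list A) (a : A -> R) (x : A) :
  (forall y, In y l -> 0 <= a y) -> In x l -> a x <= sum_list l a.
Proof.
  intros H Hin. induction l as [|y l IH]; simpl in *; [contradiction|].
  rewrite sum_list_cons. destruct Hin as [<-|Hin].
  - assert (0 <= sum_list l a) by (apply sum_list_nonneg'; auto). lra.
  - assert (0 <= a y) by auto. assert (a x <= sum_list l a) by auto. lra.
Qed.

Lemma sum_list_lip {A} (l : list A) (u v : A -> R) c :
  (forall a, In a l -> Rabs (u a - v a) <= c) -> Rabs (sum_list l u - sum_list l v) <= INR (length l) * c.
Proof.
  induction l as [|a l IH]; intros H.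
  - unfold sum_list; simpl. rewrite Rminus_0_r, Rabs_R0. lra.
  - rewrite !sum_list_cons. simpl length. rewrite S_INR.
    replace (u a + sum_list l u - (v a + sum_list l v)) with ((u a - v a) + (sum_list l u - sum_list l v)) by ring.
    eapply Rle_trans; [apply Rabs_triang|].
    assert (Rabs (u a - v a) <= c) by (apply H; left; auto).
    assert (Rabs (sum_list l u - sum_list l v) <= INR (length l) * c) by (apply IH; intros; apply H; right; auto).
    lra.
Qed.

Lemma sum_list_nonzero {A} (l : list A) (u : A -> R) : sum_list l u <> 0 -> exists a, In a l /\ u a <> 0.
Proof.
  intros H. apply NNPP. intros Hn. apply H. apply sum_list_zero. intros a Ha.
  apply NNPP. intros Hu. apply Hn. exists a. auto.
Qed.

Lemma sum_indicator {I} (dec : forall a b : I, {a = b} + {a <> b}) (l : list I) (k : I) (c : R) :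
  NoDup l -> In k l -> sum_list l (fun i => if dec k i then c else 0) = c.
Proof.
  induction l as [|i l IH]; intros Hnd Hin; [contradiction|].
  inversion Hnd as [|? ? Hni Hnd']. subst. rewrite sum_list_cons.
  destruct (dec k i) as [E|E].
  - subst. rewrite sum_list_zero; [ring|]. intros a Ha. destruct (dec i a); [subst; contradiction|auto].
  - destruct Hin as [E'|Hin]; [subst; contradiction|]. rewrite IH; auto. ring.
Qed.

Lemma sum_group {A I} (dec : forall a b : I, {a = b} + {a <> b}) (idx : A -> I) (a : A -> R) (J : list A) (l : list I) :
  NoDup l -> (forall j, In j J -> In (idx j) l) ->
  sum_list l (fun i => sum_list J (fun j => if dec (idx j) i then a j else 0)) = sum_list J a.
Proof.
  intros Hnd. induction J as [|j J IH]; intros H.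
  - apply sum_list_zero. intros; reflexivity.
  - rewrite (sum_list_ext l _ (fun i => (if dec (idx j) i then a j else 0) + sum_list J (fun j => if dec (idx j) i then a j else 0))).
    2:{ intros; reflexivity. }
    rewrite sum_list_plus, IH, sum_indicator; auto.
    + apply H; left; auto.
    + intros; apply H; right; auto.
Qed.

Lemma quot_lip (G Ph G' Ph' m c : R) :
  0 <= G <= Ph -> 0 <= G' <= Ph' -> 0 < m -> m <= Ph -> m <= Ph' ->
  Rabs (G - G') <= c -> Rabs (Ph - Ph') <= c ->
  Rabs (G / Ph - G' / Ph') <= 2 * c / m.
Proof.
  intros [HG HGP] [HG' HGP'] Hm HmP HmP' Hc1 Hc2.
  assert (HP : 0 < Ph) by lra. assert (HP' : 0 < Ph') by lra.
  replace (G / Ph - G' / Ph') with ((G - G') / Ph + (G' / Ph') * ((Ph' - Ph) / Ph)) by (field; lra).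
  eapply Rle_trans; [apply Rabs_triang|].
  rewrite Rabs_mult.
  rewrite (Rabs_pos_eq (G' / Ph')) by (apply Rmult_le_pos; [auto|left; apply Rinv_0_lt_compat; auto]).
  unfold Rdiv. rewrite !Rabs_mult.
  rewrite (Rabs_pos_eq (/ Ph)) by (left; apply Rinv_0_lt_compat; auto).
  rewrite Rabs_minus_sym in Hc2.
  assert (Hq : G' * / Ph' <= 1) by (apply (Rmult_le_reg_r Ph'); auto; field_simplify; lra).
  assert (Hq0 : 0 <= G' * / Ph') by (apply Rmult_le_pos; [auto|left; apply Rinv_0_lt_compat; auto]).
  assert (Hi : / Ph <= / m) by (apply Rinv_le_contravar; auto).
  assert (Hi0 : 0 < / Ph) by (apply Rinv_0_lt_compat; auto).
  assert (H1 : Rabs (G - G') * / Ph <= c * / m).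
  { apply Rle_trans with (c * / Ph). apply Rmult_le_compat_r; lra.
    assert (0 <= c) by (assert (0 <= Rabs (G - G')) by apply Rabs_pos; lra). apply Rmult_le_compat_l; lra. }
  assert (H2 : G' * / Ph' * (Rabs (Ph' - Ph) * / Ph) <= c * / m).
  { apply Rle_trans with (1 * (Rabs (Ph' - Ph) * / Ph)).
    apply Rmult_le_compat_r; [apply Rmult_le_pos; [apply Rabs_pos|lra]|lra].
    rewrite Rmult_1_l.
    apply Rle_trans with (c * / Ph). apply Rmult_le_compat_r; lra.
    assert (0 <= c) by (assert (0 <= Rabs (G - G')) by apply Rabs_pos; lra). apply Rmult_le_compat_l; lra. }
  lra.
Qed.

Lemma rmax_lip (a u v : R) : Rabs (Rmax 0 (a - u) - Rmax 0 (a - v)) <= Rabs (u - v).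
Proof.
  unfold Rmax. destruct (Rle_dec 0 (a - u)); destruct (Rle_dec 0 (a - v));
  apply Rabs_le; destruct (Rabs_le_between (u - v) (Rabs (u - v))) as [Hb _];
  destruct (Hb (Rle_refl _)); lra.
Qed.


Fixpoint mlow {A : Type} (valid : A -> Prop) (r : A -> R) (J : list A) : R :=
  match J with
  | nil => 1
  | j :: J => if excluded_middle_informative (valid j) then Rmin (r j) (mlow valid r J) else mlow valid r J
  end.

Lemma mlow_spec {A : Type} (valid : A -> Prop) (r : A -> R) (J : list A) :
  (forall j, valid j -> 0 < r j) ->
  0 < mlow valid r J /\ forall j, In j J -> valid j -> mlow valid r J <= r j.
Proof.
  intros Hr. induction J as [|j J [IH1 IH2]]; simpl.
  - split; [lra|]. intros _ [].
  - destruct (excluded_middle_informative (valid j)) as [Hv|Hv].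
    + split. apply Rmin_pos; auto. intros k [E|Hk] Hvk.
      * subst. apply Rmin_l.
      * eapply Rle_trans; [apply Rmin_r|]. auto.
    + split; auto. intros k [E|Hk] Hvk; [subst; contradiction|auto].
Qed.

Theorem corollary2 (M : Type) (d : M -> M -> R) (f : M -> M)
  (Hd : is_metric d) (Hcpt : compact_metric d) (Hf : continuous_metric d d f)
  (I : Type) (U : I -> orbit_space f -> Prop)
  (HUopen : forall i, open_in (d_one d f) (U i))
  (HUcover : forall x, exists i, U i x) :
  exists rho : I -> orbit_space f -> R,
    partition_of_unity_subordinate (d_one d f) U rho /\
    (forall i, continuous_metric (d_one d f) (fun a b => Rabs (a - b)) (rho i)) /\
    (forall i, lipschitz_wrt (d_infty d f) (rho i)).
Proof.
  destruct (d_bound M d Hd Hcpt) as [D [HD0 HD]].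
  set (d1 := d_one d f).
  assert (Hsym : forall x y : (orbit_space f), d1 x y = d1 y x) by (intros; apply d1_sym; auto).
  assert (Htri : forall x y z : (orbit_space f), d1 x z <= d1 x y + d1 y z) by (intros; apply (d1_tri M d f Hd D HD)).
  assert (Hnn : forall x y : (orbit_space f), 0 <= d1 x y) by (intros; apply (d1_nonneg M d f Hd D HD)).
  set (valid := fun (j : (orbit_space f) * R * I) => 0 < snd (fst j) /\ forall z, d1 (fst (fst j)) z < 3 * snd (fst j) -> U (snd j) z).
  set (W := fun (j : (orbit_space f) * R * I) (y : (orbit_space f)) => valid j /\ d1 (fst (fst j)) y < snd (fst j)).
  destruct (tb_complete_compact (orbit_space f) ((orbit_space f) * R * I)%type d1 (d1_refl M d f Hd) Hsym Htri
     (X_TB M d f Hd Hcpt Hf D HD0 HD) (X_complete M d f Hd Hcpt Hf D HD0 HD) W) as [J HJ].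
  { intros [[p r] i] y [Hv Hy]. simpl in *. exists (r - d1 p y). split; [lra|].
    intros z Hz. split; auto. simpl. assert (H1 := Htri p y z). lra. }
  { intros x. destruct (HUcover x) as [i Hi]. destruct (HUopen i x Hi) as [e [He Hball]].
    exists (x, e/3, i). split; [split|]; simpl.
    - lra.
    - intros z Hz. apply Hball. fold d1. lra.
    - rewrite (d1_refl M d f Hd). lra. }
  set (phi := fun (j : (orbit_space f) * R * I) (y : (orbit_space f)) =>
     if excluded_middle_informative (valid j) then Rmax 0 (2 * snd (fst j) - d1 (fst (fst j)) y) else 0).
  set (dec := fun a b : I => excluded_middle_informative (a = b)).
  set (Phi := fun y => sum_list J (fun j => phi j y)).
  set (G := fun i y => sum_list J (fun j => if dec (snd j) i then phi j y else 0)).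
  set (rho := fun i y => G i y / Phi y).
  set (m := mlow valid (fun j => snd (fst j)) J).
  destruct (mlow_spec valid (fun j => snd (fst j)) J) as [Hm0 Hm].
  { intros j [Hj _]. exact Hj. }
  fold m in Hm0, Hm.
  assert (Hphi0 : forall j y, 0 <= phi j y).
  { intros j y. unfold phi. destruct (excluded_middle_informative (valid j)); [apply Rmax_l|lra]. }
  assert (HPhi : forall y, m <= Phi y).
  { intros y. destruct (HJ y) as [j [Hin [Hv Hy]]].
    apply Rle_trans with (phi j y).
    - unfold phi. destruct (excluded_middle_informative (valid j)) as [_|Hn]; [|contradiction].
      assert (Hmj := Hm j Hin Hv). eapply Rle_trans; [|apply Rmax_r]. simpl in *. lra.
    - apply (sum_list_ge_elem' J (fun j => phi j y)); auto. }
  assert (HG0 : forall i y, 0 <= G i y <= Phi y).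
  { intros i y. split.
    - apply sum_list_nonneg'. intros j _. destruct (dec (snd j) i); auto; lra.
    - apply sum_list_le. intros j _. destruct (dec (snd j) i); [lra|auto]. }
  assert (Hphilip : forall j x y, Rabs (phi j x - phi j y) <= d1 x y).
  { intros j x y. unfold phi. destruct (excluded_middle_informative (valid j)).
    - eapply Rle_trans; [apply rmax_lip|]. apply Rabs_le.
      assert (H1 := Htri (fst (fst j)) x y). assert (H2 := Htri (fst (fst j)) y x).
      rewrite (Hsym y x) in H2. lra.
    - rewrite Rminus_0_r, Rabs_R0. auto. }
  set (L := 2 * (INR (length J)) / m).
  assert (HL0 : 0 <= L).
  { unfold L. apply Rmult_le_pos; [|left; apply Rinv_0_lt_compat; auto].
    assert (0 <= INR (length J)) by apply pos_INR. lra. }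
  assert (Hlip : forall i x y, Rabs (rho i x - rho i y) <= L * d1 x y).
  { intros i x y. unfold rho.
    replace (L * d1 x y) with (2 * (INR (length J) * d1 x y) / m) by (unfold L; field; lra).
    apply quot_lip; [apply HG0|apply HG0|exact Hm0|apply HPhi|apply HPhi| |].
    - apply sum_list_lip. intros j _. destruct (dec (snd j) i); auto.
      rewrite Rminus_0_r, Rabs_R0. auto.
    - apply sum_list_lip. intros j _. auto. }
  exists rho. split; [|split].
  - split; [|split].
    + intros i x. unfold rho. apply Rmult_le_pos; [apply HG0|].
      left; apply Rinv_0_lt_compat. specialize (HPhi x). lra.
    + intros i x Hcl. destruct (Hcl m Hm0) as [z [Hxz Hz]]. fold d1 in Hxz.
      assert (HGz : G i z <> 0).
      { intros E. apply Hz. unfold rho. rewrite E. unfold Rdiv. ring. }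
      destruct (sum_list_nonzero J _ HGz) as [j [Hin Hj]].
      destruct (dec (snd j) i) as [Ei|Ei]; [|contradiction].
      unfold phi in Hj. destruct (excluded_middle_informative (valid j)) as [Hv|]; [|contradiction].
      subst i. destruct Hv as [Hr Hball]. apply Hball.
      assert (Hpos : 0 < 2 * snd (fst j) - d1 (fst (fst j)) z).
      { unfold Rmax in Hj. destruct (Rle_dec 0 (2 * snd (fst j) - d1 (fst (fst j)) z)) as [H|H].
        - destruct H; [auto|]. exfalso; apply Hj; auto.
        - exfalso; apply Hj; auto. }
      assert (Hmj := Hm j Hin (conj Hr Hball)). simpl in Hmj.
      assert (H1 := Htri (fst (fst j)) z x). rewrite (Hsym z x) in H1. lra.
    + intros x. exists 1. split; [lra|].
      set (l' := nodup dec (map snd J)).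
      exists l'. split; [apply NoDup_nodup|split].
      * intros i y Hni _. unfold rho. replace (G i y) with 0; [unfold Rdiv; ring|].
        symmetry. apply sum_list_zero. intros j Hj. destruct (dec (snd j) i) as [E|E]; auto.
        exfalso. apply Hni. unfold l'. apply nodup_In. rewrite <- E. apply in_map. auto.
      * unfold rho. rewrite sum_list_div. unfold G. rewrite (sum_group dec snd (fun j => phi j x) J l').
        -- fold (Phi x). field. specialize (HPhi x). lra.
        -- apply NoDup_nodup.
        -- intros j Hj. unfold l'. apply nodup_In. apply in_map. auto.
  - intros i x eps He. exists (eps / (L + 1)). split; [apply Rdiv_lt_0_compat; lra|].
    intros y Hy. eapply Rle_lt_trans; [apply Hlip|].
    apply Rle_lt_trans with (L * (eps / (L + 1))).
    + apply Rmult_le_compat_l; auto. left; auto.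
    + apply (Rmult_lt_reg_r (L + 1)); [lra|]. field_simplify; lra.
  - intros i. exists (L * 3). intros x y. eapply Rle_trans; [apply Hlip|].
    rewrite Rmult_assoc. apply Rmult_le_compat_l; auto. apply (d1_le_dinf M d f Hd D HD).
Qed.
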